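(* Let $n\ge2$, $a\in\{-1,0,1\}$, $b,d\in\{1,-1\}$, $C,H\in\mathbb{R}$, and $f(v)=C-dv^2\big(a+b(H+v^{-n})^2\big)$ for $v>0$. Let $g:\mathbb{R}\to(0,\infty)$ be a non-constant smooth function with $(g')^2=f(g)$ and $g''=\tfrac12 f'(g)$ on $\mathbb{R}$. Then $g$ is of one of the types 1–5 defined in the context.
   Context: Types of a non-constant positive solution $g:\mathbb{R}\to(0,\infty)$: type 1 (periodic): $g$ is periodic with range $[v_1,v_2]$, $0<v_1<v_2$, and its maximum and minimum are each attained infinitely many times; type 2 (unbounded with no minimum): $g$ is injective with range $(v_1,\infty)$ for some $v_1>0$; type 3 (unbounded with a minimum): range $[v_1,\infty)$, $v_1$ attained exactly once and every other value of the range attained exactly twice; type 4 (bounded, not periodic, with a minimum): range $[v_1,v_2)$, $v_1$ attained exactly once, every other value exactly twice; type 5 (bounded, not periodic, with a maximum): range $(v_1,v_2]$, $v_2$ attained exactly once, every other value exactly twice. *)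

(* Defs.v *)
From Stdlib Require Import Reals Lra List.
From Coquelicot Require Import Coquelicot.
Open Scope R_scope.

Definition fpot (n : nat) (a b d C H : R) (v : R) : R :=
  C - d * v ^ 2 * (a + b * (H + / v ^ n) ^ 2).

Definition smooth (g : R -> R) : Prop :=
  forall (k : nat) (x : R), ex_derive_n g k x.

Definition periodic (g : R -> R) : Prop :=
  exists T : R, 0 < T /\ forall x, g (x + T) = g x.

Definition attained_infinitely (g : R -> R) (y : R) : Prop :=
  ~ (exists l : list R, forall x, g x = y -> In x l).

Definition attained_once (g : R -> R) (y : R) : Prop :=
  exists x, g x = y /\ forall x', g x' = y -> x' = x.

Definition attained_twice (g : R -> R) (y : R) : Prop :=
  exists x1 x2, x1 <> x2 /\ g x1 = y /\ g x2 = y /\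
    forall x, g x = y -> x = x1 \/ x = x2.

Definition in_range (g : R -> R) (y : R) : Prop := exists x, g x = y.

Definition type1 (g : R -> R) : Prop :=
  periodic g /\ exists v1 v2, 0 < v1 < v2 /\
    (forall y, in_range g y <-> v1 <= y <= v2) /\
    attained_infinitely g v1 /\ attained_infinitely g v2.

Definition type2 (g : R -> R) : Prop :=
  (forall x y, g x = g y -> x = y) /\
  exists v1, 0 < v1 /\ (forall y, in_range g y <-> v1 < y).

Definition type3 (g : R -> R) : Prop :=
  exists v1, (forall y, in_range g y <-> v1 <= y) /\
    attained_once g v1 /\ (forall y, v1 < y -> attained_twice g y).

Definition type4 (g : R -> R) : Prop :=
  ~ periodic g /\ exists v1 v2,
    (forall y, in_range g y <-> v1 <= y < v2) /\
    attained_once g v1 /\ (forall y, v1 < y < v2 -> attained_twice g y).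

Definition type5 (g : R -> R) : Prop :=
  ~ periodic g /\ exists v1 v2,
    (forall y, in_range g y <-> v1 < y <= v2) /\
    attained_once g v2 /\ (forall y, v1 < y < v2 -> attained_twice g y).

(* Main.v *)
Require Import Defs.
From Stdlib Require Import Reals Lra Lia List Classical.
From Coquelicot Require Import Coquelicot.
Open Scope R_scope.


Lemma mvt (f df : R -> R) (a b : R) : a < b ->
  (forall x, a <= x <= b -> is_derive f x (df x)) ->
  exists c, a < c < b /\ f b - f a = df c * (b - a).
Proof.
  intros Hab Hd. destruct (MVT_cor2 f df a b Hab) as [c [H1 H2]].
  - intros c Hc. apply is_derive_Reals. now apply Hd.
  - exists c. split; [lra|exact H1].
Qed.

Lemma cont_of_derive (f : R -> R) x l : is_derive f x l -> continuity_pt f x.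
Proof.
  intros H. apply continuity_pt_filterlim. apply (ex_derive_continuous f x).
  now exists l.
Qed.

Lemma cont_eps (f : R -> R) x : continuity_pt f x ->
  forall e, 0 < e -> exists d, 0 < d /\ forall v, Rabs (v - x) < d -> Rabs (f v - f x) < e.
Proof.
  intros H e He. destruct (H e He) as [d [Hd Hf]]. exists d. split; [lra|].
  intros v Hv. destruct (Req_dec v x) as [->|Hne].
  - rewrite Rminus_eq_0, Rabs_R0. exact He.
  - apply (Hf v). split; [split; [exact I| congruence] | exact Hv].
Qed.

Lemma ray_r (h h' : R -> R) x1 m B : 0 < m ->
  (forall x, is_derive h x (h' x)) ->
  (forall x, x1 <= x -> m <= Rabs (h' x)) ->
  (forall x, x1 <= x -> Rabs (h x) <= B) -> False.
Proof.
  intros Hm Hd Hh' Hh.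
  assert (HB : 0 <= B) by (specialize (Hh x1 (Rle_refl _)); pose proof (Rabs_pos (h x1)); lra).
  set (T := (2*B+1)/m).
  assert (HT : 0 < T) by (unfold T; apply Rdiv_lt_0_compat; lra).
  destruct (mvt h h' x1 (x1+T)) as [c [Hc Heq]]; [lra| intros; apply Hd |].
  assert (E: Rabs (h (x1+T) - h x1) = Rabs (h' c) * T).
  { rewrite Heq, Rabs_mult. f_equal. replace (x1+T-x1) with T by ring. apply Rabs_right; lra. }
  assert (m*T = 2*B+1) by (unfold T; field; lra).
  pose proof (Hh' c ltac:(lra)).
  pose proof (Hh (x1+T) ltac:(lra)). pose proof (Hh x1 ltac:(lra)).
  pose proof (Rabs_triang (h (x1+T)) (- h x1)). rewrite Rabs_Ropp in H3.
  assert (m*T <= Rabs (h' c) * T) by (apply Rmult_le_compat_r; lra).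
  unfold Rminus in E. lra.
Qed.

Lemma ray_l (h h' : R -> R) x1 m B : 0 < m ->
  (forall x, is_derive h x (h' x)) ->
  (forall x, x <= x1 -> m <= Rabs (h' x)) ->
  (forall x, x <= x1 -> Rabs (h x) <= B) -> False.
Proof.
  intros Hm Hd Hh' Hh.
  assert (HB : 0 <= B) by (specialize (Hh x1 (Rle_refl _)); pose proof (Rabs_pos (h x1)); lra).
  set (T := (2*B+1)/m).
  assert (HT : 0 < T) by (unfold T; apply Rdiv_lt_0_compat; lra).
  destruct (mvt h h' (x1-T) x1) as [c [Hc Heq]]; [lra| intros; apply Hd |].
  assert (E: Rabs (h x1 - h (x1-T)) = Rabs (h' c) * T).
  { rewrite Heq, Rabs_mult. f_equal. replace (x1-(x1-T)) with T by ring. apply Rabs_right; lra. }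
  assert (m*T = 2*B+1) by (unfold T; field; lra).
  pose proof (Hh' c ltac:(lra)).
  pose proof (Hh (x1-T) ltac:(lra)). pose proof (Hh x1 ltac:(lra)).
  pose proof (Rabs_triang (h x1) (- h (x1-T))). rewrite Rabs_Ropp in H3.
  assert (m*T <= Rabs (h' c) * T) by (apply Rmult_le_compat_r; lra).
  set (z := h (x1 - T)) in *. unfold Rminus in E. lra.
Qed.

Lemma incr_of_pos (g p : R -> R) a b : (forall x, is_derive g x (p x)) ->
  (forall x, a < x < b -> 0 < p x) -> a < b -> g a < g b.
Proof.
  intros Hd Hp Hab. destruct (mvt g p a b Hab) as [c [Hc Heq]]; [intros; apply Hd|].
  assert (0 < p c * (b - a)) by (apply Rmult_lt_0_compat; [apply Hp|]; lra). lra.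
Qed.

Lemma ivt (f : R -> R) a b y : (forall x, continuity_pt f x) -> a <= b ->
  Rmin (f a) (f b) <= y <= Rmax (f a) (f b) -> exists x, a <= x <= b /\ f x = y.
Proof.
  intros Hc Hab Hy. destruct (IVT_gen f a b y Hc Hy) as [x [Hx Hfx]].
  exists x. rewrite Rmin_left, Rmax_right in Hx by lra. auto.
Qed.

Section ODE.
Variable G : R -> R.
Hypothesis Glip : forall al be, 0 < al -> exists L, forall u v, al <= u <= be -> al <= v <= be ->
  Rabs (G u - G v) <= L * Rabs (u - v).

Definition sol (y q : R -> R) := (forall x, 0 < y x) /\ (forall x, is_derive y x (q x)) /\
  (forall x, is_derive q x (G (y x))).

Lemma refl_der (f df : R -> R) x0 : (forall x, is_derive f x (df x)) ->
  forall x, is_derive (fun x => f (2*x0 - x)) x (- df (2*x0 - x)).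
Proof.
  intros Hf x.
  assert (Hl : is_derive (fun x => 2*x0 - x) x (-1)) by (auto_derive; [exact I| ring]).
  pose proof (is_derive_comp f (fun x => 2*x0 - x) x _ _ (Hf (2*x0-x)) Hl) as H.
  eapply is_derive_ext; [|eapply is_derive_ext_loc]. 2: { apply filter_forall. intros; reflexivity. }
  2: { replace (- df (2*x0-x)) with (scal (-1) (df (2*x0-x))). exact H.
       unfold scal; simpl; unfold mult; simpl. ring. }
  intros; reflexivity.
Qed.

Lemma sol_refl y q x0 : sol y q -> sol (fun x => y (2*x0 - x)) (fun x => - q (2*x0 - x)).
Proof.
  intros [Hp [Hy Hq]]. split; [intros; apply Hp|split].
  - now apply refl_der.
  - intros x. pose proof (refl_der q (fun x => G (y x)) x0 Hq x) as H.
    apply (is_derive_opp) in H. simpl in H. rewrite Ropp_involutive in H.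
    eapply is_derive_ext; [|exact H]. intros; simpl. reflexivity.
Qed.
End ODE.

Section U.
Variable G : R -> R.
Hypothesis Glip : forall al be, 0 < al -> exists L, forall u v, al <= u <= be -> al <= v <= be ->
  Rabs (G u - G v) <= L * Rabs (u - v).

Lemma Phi_der (y1 q1 y2 q2 : R -> R) K x0 x : (forall x, is_derive y1 x (q1 x)) -> (forall x, is_derive y2 x (q2 x)) ->
 (forall x, is_derive q1 x (G (y1 x))) -> (forall x, is_derive q2 x (G (y2 x))) ->
 is_derive (fun x => ((y1 x - y2 x)^2 + (q1 x - q2 x)^2) * exp (-(K*(x-x0)))) x
  ((2*(y1 x - y2 x)*(q1 x - q2 x) + 2*(q1 x - q2 x)*(G (y1 x) - G (y2 x)) - K * ((y1 x - y2 x)^2 + (q1 x - q2 x)^2)) * exp (-(K*(x-x0)))).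
Proof.
  intros H H0 H1 H2. auto_derive.
  - repeat split; eexists; eauto.
  - replace (Derive (fun x1 : R => y1 x1) x) with (q1 x) by (symmetry; apply is_derive_unique; apply H).
    replace (Derive (fun x1 : R => y2 x1) x) with (q2 x) by (symmetry; apply is_derive_unique; apply H0).
    replace (Derive (fun x1 : R => q1 x1) x) with (G (y1 x)) by (symmetry; apply is_derive_unique; apply H1).
    replace (Derive (fun x1 : R => q2 x1) x) with (G (y2 x)) by (symmetry; apply is_derive_unique; apply H2).
    change (x + - x0) with (x - x0). set (e := exp _). ring.
Qed.

Lemma uniq_r y1 q1 y2 q2 x0 : sol G y1 q1 -> sol G y2 q2 -> y1 x0 = y2 x0 -> q1 x0 = q2 x0 ->
  forall t, x0 <= t -> y1 t = y2 t.
Proof.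
  intros [P1 [D1 E1]] [P2 [D2 E2]] H0 H1 t Ht.
  destruct (Req_dec t x0) as [->|Hne]; [exact H0|].
  assert (Hlt : x0 < t) by lra.
  assert (C1 : forall c, x0 <= c <= t -> continuity_pt y1 c) by (intros; eapply cont_of_derive; apply D1).
  assert (C2 : forall c, x0 <= c <= t -> continuity_pt y2 c) by (intros; eapply cont_of_derive; apply D2).
  destruct (continuity_ab_min y1 x0 t ltac:(lra) C1) as [m1 [Hm1 _]].
  destruct (continuity_ab_min y2 x0 t ltac:(lra) C2) as [m2 [Hm2 _]].
  destruct (continuity_ab_maj y1 x0 t ltac:(lra) C1) as [M1 [HM1 _]].
  destruct (continuity_ab_maj y2 x0 t ltac:(lra) C2) as [M2 [HM2 _]].
  set (al := Rmin (y1 m1) (y2 m2)). set (be := Rmax (y1 M1) (y2 M2)).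
  assert (Hal : 0 < al) by (unfold al; apply Rmin_glb_lt; auto).
  destruct (Glip al be Hal) as [L HL].
  set (L' := Rabs L). set (K := 1 + L').
  assert (HL' : forall x, x0 <= x <= t -> Rabs (G (y1 x) - G (y2 x)) <= L' * Rabs (y1 x - y2 x)).
  { intros x Hx. eapply Rle_trans. apply HL.
    - split; [eapply Rle_trans; [apply Rmin_l| apply Hm1; lra]|eapply Rle_trans; [apply HM1; lra| apply Rmax_l]].
    - split; [eapply Rle_trans; [apply Rmin_r| apply Hm2; lra]|eapply Rle_trans; [apply HM2; lra| apply Rmax_r]].
    - apply Rmult_le_compat_r; [apply Rabs_pos| apply Rle_abs]. }
  destruct (mvt _ _ x0 t Hlt (fun x _ => Phi_der y1 q1 y2 q2 K x0 x D1 D2 E1 E2)) as [c [Hc Heq]].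
  rewrite H0, H1 in Heq. replace (x0 - x0) with 0 in Heq by ring. rewrite Rmult_0_r, Ropp_0, exp_0, !Rminus_eq_0 in Heq.
  set (u := y1 c - y2 c) in *. set (w := q1 c - q2 c) in *.
  set (D := G (y1 c) - G (y2 c)) in *.
  assert (HD : Rabs D <= L' * Rabs u) by (apply HL'; lra).
  assert (HL0 : 0 <= L') by apply Rabs_pos.
  assert (Hneg : 2*u*w + 2*w*D - K*(u^2+w^2) <= 0).
  { assert (2*w*D <= 2 * Rabs w * Rabs D).
    { pose proof (Rle_abs (w*D)). rewrite Rabs_mult in *. nra. }
    assert (2 * Rabs w * Rabs D <= 2 * Rabs w * (L' * Rabs u)).
    { apply Rmult_le_compat_l; [pose proof (Rabs_pos w); lra| exact HD]. }
    assert (Rabs u ^2 = u^2) by apply pow2_abs.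
    assert (Rabs w ^2 = w^2) by apply pow2_abs.
    pose proof (Rabs_pos u). pose proof (Rabs_pos w).
    assert (2*u*w <= u^2+w^2) by (pose proof (pow2_ge_0 (u-w)); nra).
    assert (2*Rabs w*(L'*Rabs u) <= L'*(u^2+w^2)).
    { pose proof (pow2_ge_0 (Rabs u - Rabs w)). assert (0 <= L' * (Rabs u - Rabs w)^2) by (apply Rmult_le_pos; lra). nra. }
    unfold K. lra. }
  assert (He : 0 < exp (- (K * (c - x0)))) by apply exp_pos.
  assert (Het : 0 < exp (- (K * (t - x0)))) by apply exp_pos.
  set (A := (y1 t - y2 t)^2 + (q1 t - q2 t)^2) in *.
  assert (A <= 0).
  { assert (A * exp (- (K * (t - x0))) <= 0).
    { assert ((2*u*w + 2*w*D - K*(u^2+w^2)) * exp (- (K * (c - x0))) * (t - x0) <= 0).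
      { apply Rmult_le_0_r; [|lra]. apply Rmult_le_0_r; lra. }
      replace ((0^2 + 0^2)*1) with 0 in Heq by ring. lra. }
    nra. }
  assert (0 <= (q1 t - q2 t)^2) by apply pow2_ge_0.
  assert ((y1 t - y2 t)^2 = 0) by (pose proof (pow2_ge_0 (y1 t - y2 t)); unfold A in *; lra).
  apply Rminus_diag_uniq. nra.
Qed.
End U.

Section S.
Variable G : R -> R.
Hypothesis Glip : forall al be, 0 < al -> exists L, forall u v, al <= u <= be -> al <= v <= be ->
  Rabs (G u - G v) <= L * Rabs (u - v).

Lemma uniq y1 q1 y2 q2 x0 : sol G y1 q1 -> sol G y2 q2 -> y1 x0 = y2 x0 -> q1 x0 = q2 x0 ->
  forall t, y1 t = y2 t.
Proof.
  intros S1 S2 H0 H1 t. destruct (Rle_or_lt x0 t).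
  - eapply uniq_r; eauto.
  - pose proof (uniq_r G Glip _ _ _ _ x0 (sol_refl G _ _ x0 S1) (sol_refl G _ _ x0 S2)) as U.
    simpl in U. replace (2*x0-x0) with x0 in U by ring.
    specialize (U ltac:(auto) ltac:(rewrite H1; auto) (2*x0 - t) ltac:(lra)).
    replace (2*x0 - (2*x0 - t)) with t in U by ring. exact U.
Qed.

Lemma sym y q x0 : sol G y q -> q x0 = 0 -> forall t, y t = y (2*x0 - t).
Proof.
  intros S Hq. apply (uniq y q _ _ x0 S (sol_refl G _ _ x0 S)).
  - f_equal; ring.
  - replace (2*x0-x0) with x0 by ring. rewrite Hq. ring.
Qed.

Lemma period y q x1 x2 : sol G y q -> q x1 = 0 -> q x2 = 0 -> forall x, y (x + 2*(x2-x1)) = y x.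
Proof.
  intros S H1 H2 x. rewrite (sym y q x2 S H2). rewrite (sym y q x1 S H1 x).
  f_equal; ring.
Qed.
End S.

Lemma list_bound (l : list R) : exists M, forall x, In x l -> x <= M.
Proof.
  induction l as [|a l [M HM]].
  - exists 0. intros x [].
  - exists (Rmax a M). intros x [->|Hx]; [apply Rmax_l|]. eapply Rle_trans; [apply HM; auto| apply Rmax_r].
Qed.

Lemma big_nat (r : R) : exists N : nat, r < INR N.
Proof.
  destruct (nfloor_ex (Rabs r) (Rabs_pos r)) as [N HN]. exists (S N). rewrite S_INR.
  pose proof (Rle_abs r). lra.
Qed.

Lemma type1_of_period (g : R -> R) T : 0 < T -> (forall x, g (x+T) = g x) ->
  (forall x, continuity_pt g x) -> (forall x, 0 < g x) -> (exists x y, g x <> g y) -> type1 g.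
Proof.
  intros HT Hp Hc Hpos [xa [xb Hne]].
  assert (gk : forall (k : nat) x, g (x + INR k * T) = g x).
  { induction k; intros x; [simpl; f_equal; ring|]. rewrite S_INR.
    replace (x + (INR k + 1) * T) with ((x + INR k * T) + T) by ring. rewrite Hp. apply IHk. }
  assert (red : forall x, exists x', 0 <= x' <= T /\ g x' = g x).
  { intros x. destruct (big_nat (Rabs x / T)) as [N HN].
    assert (Hy : 0 <= x + INR N * T).
    { pose proof (Rle_abs (-x)). rewrite Rabs_Ropp in H.
      assert (Rabs x < INR N * T).
      { apply (Rmult_lt_compat_r T) in HN; [|lra]. unfold Rdiv in HN. rewrite Rmult_assoc, Rinv_l, Rmult_1_r in HN; lra. }
      lra. }
    assert (Hq : 0 <= (x + INR N * T) / T) by (apply Rdiv_le_0_compat; lra).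
    destruct (nfloor_ex _ Hq) as [k Hk].
    exists (x + INR N * T - INR k * T). split.
    - assert (INR k * T <= x + INR N * T < INR k * T + T).
      { destruct Hk as [Hk1 Hk2].
        apply (Rmult_le_compat_r T) in Hk1; [|lra]. apply (Rmult_lt_compat_r T) in Hk2; [|lra].
        unfold Rdiv in *. rewrite Rmult_assoc, Rinv_l, Rmult_1_r in Hk1, Hk2 by lra. lra. }
      lra.
    - rewrite <- (gk k). replace (x + INR N * T - INR k * T + INR k * T) with (x + INR N * T) by ring.
      apply gk. }
  destruct (continuity_ab_min g 0 T ltac:(lra) (fun c _ => Hc c)) as [xm [Hm Hxm]].
  destruct (continuity_ab_maj g 0 T ltac:(lra) (fun c _ => Hc c)) as [xM [HM HxM]].
  assert (Hrange : forall x, g xm <= g x <= g xM).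
  { intros x. destruct (red x) as [x' [Hx' <-]]. auto. }
  split; [exists T; split; auto|].
  exists (g xm), (g xM). split; [split; [apply Hpos|]|split; [|split]].
  - destruct (Rle_lt_or_eq _ _ (proj2 (Hrange xm))) as [|Heq]; auto.
    exfalso. apply Hne. pose proof (Hrange xa). pose proof (Hrange xb). lra.
  - intros y; split.
    + intros [x <-]. auto.
    + intros Hy. destruct (IVT_gen g xm xM y Hc) as [x [_ Hx]].
      * split; [apply Rle_trans with (g xm); [apply Rmin_l| tauto]|apply Rle_trans with (g xM); [tauto|apply Rmax_r]].
      * exists x; auto.
  - intros [l Hl]. destruct (list_bound l) as [M HM0].
    destruct (big_nat ((M - xm)/T)) as [N HN].
    assert (M - xm < INR N * T).
    { apply (Rmult_lt_compat_r T) in HN; [|lra]. unfold Rdiv in HN. rewrite Rmult_assoc, Rinv_l, Rmult_1_r in HN; lra. }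
    specialize (HM0 _ (Hl (xm + INR N * T) (gk N xm))). lra.
  - intros [l Hl]. destruct (list_bound l) as [M HM0].
    destruct (big_nat ((M - xM)/T)) as [N HN].
    assert (M - xM < INR N * T).
    { apply (Rmult_lt_compat_r T) in HN; [|lra]. unfold Rdiv in HN. rewrite Rmult_assoc, Rinv_l, Rmult_1_r in HN; lra. }
    specialize (HM0 _ (Hl (xM + INR N * T) (gk N xM))). lra.
Qed.

Section Shape.
Variable k : R -> R.
Variable x0 : R.
Hypothesis Hc : forall x, continuity_pt k x.
Hypothesis Hs : forall t, k t = k (2*x0 - t).
Hypothesis Hm : forall u w, x0 <= u -> u < w -> k u < k w.

Lemma refl_pt x : exists x', x0 <= x' /\ k x' = k x /\ (x' = x \/ x' = 2*x0 - x).
Proof.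
  destruct (Rle_or_lt x0 x).
  - exists x; auto.
  - exists (2*x0 - x). split; [lra|]. split; [symmetry; apply Hs| auto].
Qed.

Lemma sh_ge x : k x0 <= k x.
Proof.
  destruct (refl_pt x) as [x' [H1 [<- _]]]. destruct (Rle_lt_or_eq _ _ H1) as [H|<-]; [left; apply Hm; lra| lra].
Qed.

Lemma sh_once : attained_once k (k x0).
Proof.
  exists x0. split; auto. intros x Hx. destruct (refl_pt x) as [x' [H1 [H2 H3]]].
  destruct (Rle_lt_or_eq _ _ H1) as [H|H].
  - specialize (Hm x0 x' (Rle_refl _) H). lra.
  - destruct H3; lra.
Qed.

Lemma sh_in y : k x0 <= y -> (exists x, y < k x) -> exists z, x0 <= z /\ k z = y.
Proof.
  intros Hy [x Hx]. destruct (refl_pt x) as [x' [H1 [H2 _]]].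
  destruct (ivt k x0 x' y Hc H1) as [z [Hz Hkz]].
  - rewrite Rmin_left, Rmax_right; [lra| |]; pose proof (sh_ge x'); lra.
  - exists z; split; [lra|auto].
Qed.

Lemma sh_twice y : k x0 < y -> (exists x, y < k x) -> attained_twice k y.
Proof.
  intros Hy Hx. destruct (sh_in y ltac:(lra) Hx) as [z [Hz Hkz]].
  assert (Hz' : x0 < z) by (destruct (Rle_lt_or_eq _ _ Hz); [auto| subst; lra]).
  exists z, (2*x0 - z). split; [lra|]. split; [auto|]. split; [rewrite <- Hs; auto|].
  intros x Hkx. destruct (refl_pt x) as [x' [H1 [H2 H3]]].
  assert (x' = z).
  { destruct (Rtotal_order x' z) as [H|[H|H]]; auto.
    - specialize (Hm x' z H1 H). lra.
    - specialize (Hm z x' Hz H). lra. }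
  subst x'. destruct H3 as [H3|H3]; [left; auto| right; lra].
Qed.

Lemma sh_notper : ~ periodic k.
Proof.
  intros [T [HT HP]]. specialize (HP x0). specialize (Hm x0 (x0+T) (Rle_refl _) ltac:(lra)). lra.
Qed.

Lemma sh_nomax x : exists x', k x < k x'.
Proof.
  destruct (refl_pt x) as [x' [H1 [H2 _]]]. exists (x'+1). rewrite <- H2. apply Hm; lra.
Qed.

Lemma sh_type3 : (forall M, exists x, M < k x) -> type3 k.
Proof.
  intros Hu. exists (k x0). split; [|split; [apply sh_once|]].
  - intros y; split; [intros [x <-]; apply sh_ge|].
    intros Hy. destruct (sh_in y Hy (Hu y)) as [z [_ Hz]]. exists z; auto.
  - intros y Hy. apply sh_twice; auto.
Qed.

Lemma sh_type4 : (exists M, forall x, k x <= M) -> type4 k.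
Proof.
  intros [M HM]. set (E := fun z => exists x, z = k x).
  destruct (completeness E) as [v2 [Hub Hlub]].
  - exists M. intros z [x ->]. auto.
  - exists (k x0), x0. auto.
  - assert (Hle : forall x, k x <= v2) by (intros x; apply Hub; exists x; auto).
    assert (Hlt : forall x, k x < v2).
    { intros x. destruct (sh_nomax x) as [x' Hx']. pose proof (Hle x'). lra. }
    assert (Happ : forall y, y < v2 -> exists x, y < k x).
    { intros y Hy. apply NNPP. intros Hn. assert (v2 <= y); [|lra]. apply Hlub.
      intros z [x ->]. apply Rnot_lt_le. intros Hl. apply Hn. exists x; auto. }
    split; [apply sh_notper|]. exists (k x0), v2. split; [|split; [apply sh_once|]].
    + intros y; split; [intros [x <-]; split; [apply sh_ge| apply Hlt]|].
      intros [Hy1 Hy2]. destruct (sh_in y Hy1 (Happ y Hy2)) as [z [_ Hz]]. exists z; auto.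
    + intros y [Hy1 Hy2]. apply sh_twice; auto.
Qed.
End Shape.

Lemma type5_of_neg (g : R -> R) : type4 (fun x => - g x) -> type5 g.
Proof.
  intros [Hnp [v1 [v2 [Hr [Ho Ht]]]]]. split.
  - intros [T [HT HP]]. apply Hnp. exists T. split; auto. intros x. rewrite HP. auto.
  - exists (-v2), (-v1). split; [|split].
    + intros y. split.
      * intros [x Hx]. assert (in_range (fun x => - g x) (-y)) by (exists x; lra).
        apply Hr in H. lra.
      * intros Hy. destruct (proj2 (Hr (-y)) ltac:(lra)) as [x Hx]. exists x. lra.
    + destruct Ho as [x [Hx Hu]]. exists x. split; [lra|]. intros x' Hx'. apply Hu. lra.
    + intros y Hy. destruct (Ht (-y) ltac:(lra)) as [x1 [x2 [Hne [H1 [H2 H3]]]]].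
      exists x1, x2. split; auto. split; [lra|]. split; [lra|]. intros x Hx. apply H3. lra.
Qed.

Section T2.
Variables F G : R -> R.
Hypothesis Glip : forall al be, 0 < al -> exists L, forall u v, al <= u <= be -> al <= v <= be ->
  Rabs (G u - G v) <= L * Rabs (u - v).
Hypothesis Fcont : forall v, 0 < v -> continuity_pt F v.
Hypothesis Fnear0 : exists eps, 0 < eps /\ ((forall v, 0 < v < eps -> F v < 0) \/ (forall v, 0 < v < eps -> 1 <= F v)).
Hypothesis Fmvt : forall u w, 0 < u < w -> exists c, u < c < w /\ F w - F u = 2 * G c * (w - u).
Hypothesis Gzeros : forall u c w, 0 < u -> u < c -> c < w -> G u = 0 -> G c = 0 -> G w = 0 -> False.

Lemma G_cont l : 0 < l -> forall e, 0 < e -> exists d, 0 < d /\ forall v, Rabs (v - l) < d -> Rabs (G v - G l) < e.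
Proof.
  intros Hl e He. destruct (Glip (l/2) (2*l) ltac:(lra)) as [L HL].
  set (d := Rmin (l/2) (e/(Rabs L + 1))).
  assert (Hd1 : d <= l/2) by apply Rmin_l. assert (Hd2 : d <= e/(Rabs L+1)) by apply Rmin_r.
  assert (HLp : 0 < Rabs L + 1) by (pose proof (Rabs_pos L); lra).
  assert (Hd0 : 0 < d) by (apply Rmin_glb_lt; [lra| apply Rdiv_lt_0_compat; lra]).
  exists d. split; auto. intros v Hv.
  apply Rabs_def2 in Hv as Hv'. destruct Hv' as [Hv1 Hv2].
  eapply Rle_lt_trans. apply HL; lra.
  assert (L * Rabs (v - l) <= Rabs L * Rabs (v - l)) by (apply Rmult_le_compat_r; [apply Rabs_pos| apply Rle_abs]).
  assert ((Rabs L + 1) * d <= e).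
  { apply (Rmult_le_compat_l (Rabs L + 1)) in Hd2; [|lra]. unfold Rdiv in Hd2.
    rewrite <- Rmult_assoc, (Rmult_comm _ e), Rmult_assoc, Rinv_r, Rmult_1_r in Hd2; lra. }
  pose proof (Rabs_pos L). pose proof (Rabs_pos (v - l)). nra.
Qed.

Lemma sq_ge (q c : R) : 0 < c -> c < q^2 -> Rmin 1 c <= Rabs q.
Proof.
  intros Hc Hq. rewrite <- pow2_abs in Hq. pose proof (Rabs_pos q).
  destruct (Rle_or_lt 1 (Rabs q)). { pose proof (Rmin_l 1 c). lra. }
  pose proof (Rmin_r 1 c). nra.
Qed.

Lemma end_gen (y q : R -> R) (ray : R -> R -> Prop) l : 0 < l -> sol G y q -> (forall x, q x ^ 2 = F (y x)) ->
  (forall d, 0 < d -> exists x1, forall x, ray x1 x -> Rabs (y x - l) < d) ->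
  (forall h h' x1 m B, 0 < m -> (forall x, is_derive h x (h' x)) -> (forall x, ray x1 x -> m <= Rabs (h' x)) ->
     (forall x, ray x1 x -> Rabs (h x) <= B) -> False) ->
  (forall x1, ray x1 x1) ->
  F l = 0 /\ G l = 0.
Proof.
  intros Hl [Hp [Dy Dq]] He Hnear Hray Hne.
  assert (HF : F l = 0).
  { apply NNPP. intros HF. assert (Ha : 0 < Rabs (F l) / 2) by (apply Rabs_pos_lt in HF; lra).
    destruct (cont_eps F l (Fcont l Hl) _ Ha) as [d [Hd Hfd]].
    destruct (Hnear d Hd) as [x1 Hx1].
    destruct (Rlt_or_le (F l) 0) as [Hneg|Hpos].
    - specialize (Hfd _ (Hx1 x1 (Hne x1))). rewrite (Rabs_left (F l)) in Hfd by lra. rewrite <- He in Hfd.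
      apply Rabs_def2 in Hfd. pose proof (pow2_ge_0 (q x1)). lra.
    - assert (Hpos' : 0 < F l) by (destruct Hpos; [auto| congruence]).
      rewrite (Rabs_right (F l)) in Ha, Hfd by lra.
      apply (Hray y q x1 (Rmin 1 (F l / 2)) (l + d)).
      + apply Rmin_glb_lt; lra.
      + exact Dy.
      + intros x Hx. apply sq_ge; [lra|]. rewrite He. specialize (Hfd _ (Hx1 x Hx)).
        apply Rabs_def2 in Hfd. lra.
      + intros x Hx. specialize (Hx1 x Hx). apply Rabs_def2 in Hx1. rewrite Rabs_right; [lra|].
        specialize (Hp x). lra. }
  split; auto.
  apply NNPP. intros HG. assert (Ha : 0 < Rabs (G l) / 2) by (apply Rabs_pos_lt in HG; lra).
  destruct (G_cont l Hl _ Ha) as [d1 [Hd1 Hg1]].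
  destruct (cont_eps F l (Fcont l Hl) 1 ltac:(lra)) as [d2 [Hd2 Hf2]].
  destruct (Hnear (Rmin d1 d2) ltac:(apply Rmin_glb_lt; auto)) as [x1 Hx1].
  apply (Hray q (fun x => G (y x)) x1 (Rabs (G l) / 2) 1 Ha Dq).
  - intros x Hx. specialize (Hx1 x Hx). pose proof (Rmin_l d1 d2). pose proof (Rmin_r d1 d2).
    specialize (Hg1 (y x) ltac:(lra)).
    pose proof (Rabs_triang (G (y x) - G l) (G l)). replace (G (y x) - G l + G l) with (G (y x)) in H1 by ring.
    pose proof (Rabs_triang (G l - G (y x)) (G (y x))). replace (G l - G (y x) + G (y x)) with (G l) in H2 by ring.
    rewrite Rabs_minus_sym in H2. lra.
  - intros x Hx. specialize (Hx1 x Hx). pose proof (Rmin_l d1 d2). pose proof (Rmin_r d1 d2).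
    specialize (Hf2 (y x) ltac:(lra)). rewrite HF, Rminus_0_r, <- He in Hf2.
    rewrite <- pow2_abs in Hf2. rewrite Rabs_right in Hf2 by (apply Rle_ge, pow2_ge_0).
    pose proof (Rabs_pos (q x)). destruct (Rle_or_lt (Rabs (q x)) 1); auto. nra.
Qed.

Lemma type2_incr y q : sol G y q -> (forall x, q x ^ 2 = F (y x)) -> (forall x, 0 < q x) -> type2 y.
Proof.
  intros S He Hq. destruct S as [Hp [Dy Dq]] eqn:ES.
  assert (mono : forall u w, u < w -> y u < y w) by (intros; eapply incr_of_pos; eauto).
  assert (monol : forall u w, u <= w -> y u <= y w).
  { intros u w H. destruct (Rle_lt_or_eq _ _ H); [left; auto| subst; lra]. }
  assert (Hcy : forall x, continuity_pt y x) by (intros; eapply cont_of_derive; apply Dy).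
  set (E := fun z => forall x, z <= y x).
  destruct (completeness E) as [i [Hub Hlub]].
  - exists (y 0). intros z Hz. apply Hz.
  - exists 0. intros x. left. apply Hp.
  assert (Hi1 : forall x, i <= y x) by (intros x; apply Hlub; intros z Hz; apply Hz).
  assert (Hi2 : forall z, i < z -> exists x, y x < z).
  { intros z Hz. apply NNPP. intros Hn. assert (z <= i); [|lra]. apply Hub. intros x.
    apply Rnot_lt_le. intros Hl. apply Hn. exists x; auto. }
  assert (Hi0 : 0 <= i) by (apply Hub; intros x; left; apply Hp).
  assert (Hipos : 0 < i).
  { destruct Fnear0 as [eps [Heps Hor]].
    destruct (Rlt_or_le i eps) as [Hie|Hie]; [|lra]. exfalso.
    destruct (Hi2 eps Hie) as [x1 Hx1].
    destruct Hor as [Hneg|Hge].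
    - specialize (Hneg (y x1) (conj (Hp x1) Hx1)). rewrite <- He in Hneg. pose proof (pow2_ge_0 (q x1)). lra.
    - apply (ray_l y q x1 1 eps ltac:(lra) Dy).
      + intros x Hx. pose proof (monol _ _ Hx). assert (Hyx : 0 < y x < eps) by (split; [apply Hp| lra]).
        specialize (Hge (y x) Hyx).
        rewrite <- He in Hge. rewrite <- pow2_abs in Hge. pose proof (Rabs_pos (q x)). nra.
      + intros x Hx. pose proof (monol _ _ Hx). pose proof (Hp x). rewrite Rabs_right; lra. }
  assert (Hunb : forall M, exists x, M < y x).
  { apply NNPP. intros Hn. apply not_all_ex_not in Hn. destruct Hn as [M HM].
    assert (HM' : forall x, y x <= M).
    { intros x. apply Rnot_lt_le. intros Hl. apply HM. exists x; auto. }
    set (E2 := fun z => exists x, z = y x).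
    destruct (completeness E2) as [s [Hsub Hslub]].
    - exists M. intros z [x ->]; auto.
    - exists (y 0), 0; auto.
    assert (Hs1 : forall x, y x <= s) by (intros x; apply Hsub; exists x; auto).
    assert (Hs2 : forall z, z < s -> exists x, z < y x).
    { intros z Hz. apply NNPP. intros Hn. assert (s <= z); [|lra]. apply Hslub.
      intros w [x ->]. apply Rnot_lt_le. intros Hl. apply Hn. exists x; auto. }
    assert (His : i < s) by (pose proof (Hi1 (-1)); pose proof (Hs1 0); pose proof (mono (-1) 0 ltac:(lra)); lra).
    destruct (end_gen y q (fun x1 x => x1 <= x) s ltac:(lra) S He) as [Fs Gs].
    { intros d Hd. destruct (Hs2 (s - d) ltac:(lra)) as [x1 Hx1]. exists x1. intros x Hx.
      pose proof (monol _ _ Hx). pose proof (Hs1 x). rewrite Rabs_left1; lra. }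
    { intros h h' x1 m B Hm Dh H1 H2. exact (ray_r h h' x1 m B Hm Dh H1 H2). }
    { intros; lra. }
    destruct (end_gen y q (fun x1 x => x <= x1) i Hipos S He) as [Fi Gi].
    { intros d Hd. destruct (Hi2 (i + d) ltac:(lra)) as [x1 Hx1]. exists x1. intros x Hx.
      pose proof (monol _ _ Hx). pose proof (Hi1 x). rewrite Rabs_right; lra. }
    { intros h h' x1 m B Hm Dh H1 H2. exact (ray_l h h' x1 m B Hm Dh H1 H2). }
    { intros; lra. }
    destruct (Fmvt i s ltac:(lra)) as [c [Hc Hce]].
    rewrite Fs, Fi in Hce. assert (G c = 0).
    { assert (G c * (s - i) = 0) by lra. apply Rmult_integral in H. destruct H; [auto| lra]. }
    exact (Gzeros i c s Hipos (proj1 Hc) (proj2 Hc) Gi H Gs). }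
  split.
  - intros u w Huw. destruct (Rtotal_order u w) as [H|[H|H]]; auto.
    + specialize (mono _ _ H). lra.
    + specialize (mono _ _ H). lra.
  - exists i. split; auto. intros z. split.
    + intros [x <-]. pose proof (Hi1 (x-1)). pose proof (mono (x-1) x ltac:(lra)). lra.
    + intros Hz. destruct (Hi2 z Hz) as [x1 Hx1]. destruct (Hunb z) as [x2 Hx2].
      assert (x1 < x2).
      { destruct (Rlt_or_le x1 x2); auto. pose proof (monol _ _ H). lra. }
      destruct (ivt y x1 x2 z Hcy ltac:(lra)) as [x [_ Hx]].
      * rewrite Rmin_left, Rmax_right; [lra| |]; pose proof (mono _ _ H); lra.
      * exists x; auto.
Qed.
End T2.

Lemma sign_const (p : R -> R) (I : R -> Prop) x1 : (forall x, continuity_pt p x) ->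
  (forall u w z, I u -> I w -> u <= z <= w -> I z) -> (forall z, I z -> p z <> 0) -> I x1 ->
  (forall x, I x -> 0 < p x) \/ (forall x, I x -> p x < 0).
Proof.
  intros Hc Hconv Hnz Hx1.
  assert (key : forall x, I x -> p x * p x1 > 0).
  { intros x Hx. apply NNPP. intros Hn.
    assert (Hle : p x * p x1 <= 0) by lra.
    assert (Hmm : forall u w, u <= w -> I u -> I w -> p u * p w <= 0 -> False).
    { intros u w Huw Hu Hw Hpw.
      destruct (ivt p u w 0 Hc Huw) as [z [Hz Hpz]].
      - destruct (Rle_or_lt 0 (p u)).
        + assert (p w <= 0).
          { destruct (Rle_lt_or_eq _ _ H). nra. exfalso; apply (Hnz u Hu); auto. }
          split; [apply Rle_trans with (p w); [apply Rmin_r| lra]| apply Rle_trans with (p u); [lra| apply Rmax_l]].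
        + assert (0 <= p w) by nra.
          split; [apply Rle_trans with (p u); [apply Rmin_l| lra]| apply Rle_trans with (p w); [lra| apply Rmax_r]].
      - exact (Hnz z (Hconv u w z Hu Hw Hz) Hpz). }
    destruct (Rle_or_lt x x1).
    - exact (Hmm x x1 H Hx Hx1 Hle).
    - apply (Hmm x1 x ltac:(lra) Hx1 Hx). lra. }
  destruct (Rlt_or_le 0 (p x1)) as [H|H].
  - left. intros x Hx. specialize (key x Hx). nra.
  - right. intros x Hx. specialize (key x Hx). assert (p x1 <> 0) by (apply Hnz; auto). nra.
Qed.

Section Main.
Variables F G : R -> R.
Hypothesis Glip : forall al be, 0 < al -> exists L, forall u v, al <= u <= be -> al <= v <= be ->
  Rabs (G u - G v) <= L * Rabs (u - v).
Hypothesis Fcont : forall v, 0 < v -> continuity_pt F v.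
Hypothesis Fnear0 : exists eps, 0 < eps /\ ((forall v, 0 < v < eps -> F v < 0) \/ (forall v, 0 < v < eps -> 1 <= F v)).
Hypothesis Fmvt : forall u w, 0 < u < w -> exists c, u < c < w /\ F w - F u = 2 * G c * (w - u).
Hypothesis Gzeros : forall u c w, 0 < u -> u < c -> c < w -> G u = 0 -> G c = 0 -> G w = 0 -> False.

Theorem classify g p : sol G g p -> (forall x, p x ^ 2 = F (g x)) -> (exists x y, g x <> g y) ->
  type1 g \/ type2 g \/ type3 g \/ type4 g \/ type5 g.
Proof.
  intros S He Hnc. pose proof S as [Hp [Dg Dp]].
  assert (Hcg : forall x, continuity_pt g x) by (intros; eapply cont_of_derive; apply Dg).
  assert (Hcp : forall x, continuity_pt p x) by (intros; eapply cont_of_derive; apply Dp).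
  destruct (classic (exists x1 x2, x1 < x2 /\ p x1 = 0 /\ p x2 = 0)) as [[x1 [x2 [H12 [H1 H2]]]]|NA].
  { left. apply (type1_of_period g (2*(x2-x1))); auto; [lra|]. apply (period G Glip g p); auto. }
  destruct (classic (exists x0, p x0 = 0)) as [[x0 H0]|NB].
  - assert (Hun : forall z, x0 < z -> p z <> 0).
    { intros z Hz Hpz. apply NA. exists x0, z. auto. }
    assert (Hsym := sym G Glip g p x0 S H0).
    destruct (sign_const p (fun z => x0 < z) (x0+1) Hcp) as [Hpos|Hneg]; auto; [intros; lra| lra| |].
    + assert (Hm : forall u w, x0 <= u -> u < w -> g u < g w).
      { intros u w Hu Huw. apply (incr_of_pos g p); auto. intros x Hx. apply Hpos. lra. }
      destruct (classic (forall M, exists x, M < g x)) as [Hu|Hb].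
      * right; right; left. apply (sh_type3 g x0); auto.
      * right; right; right; left. apply (sh_type4 g x0); auto.
        apply not_all_ex_not in Hb. destruct Hb as [M HM]. exists M. intros x.
        apply Rnot_lt_le. intros Hl. apply HM. exists x; auto.
    + right; right; right; right. apply type5_of_neg.
      apply (sh_type4 (fun x => - g x) x0).
      * intros x. apply continuity_pt_opp. auto.
      * intros t. rewrite <- Hsym. auto.
      * intros u w Hu Huw. apply (incr_of_pos (fun x => - g x) (fun x => - p x)).
        -- intros x. pose proof (is_derive_opp _ _ _ (Dg x)) as Hd. simpl in Hd. exact Hd.
        -- intros x Hx. specialize (Hneg x ltac:(lra)). lra.
        -- auto.
      * exists 0. intros x. specialize (Hp x). lra.
  - assert (Hnz : forall z, True -> p z <> 0) by (intros z _ Hz; apply NB; exists z; auto).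
    destruct (sign_const p (fun _ => True) 0 Hcp) as [Hpos|Hneg]; auto.
    + right; left. apply (type2_incr F G Glip Fcont Fnear0 Fmvt Gzeros g p); auto.
    + right; left.
      assert (T := type2_incr F G Glip Fcont Fnear0 Fmvt Gzeros _ _ (sol_refl G g p 0 S)).
      simpl in T. destruct T as [Hinj [v1 [Hv1 Hr]]].
      * intros x. rewrite <- He. ring.
      * intros x. specialize (Hneg (2*0-x) I). lra.
      * split.
        -- intros u w Huw. assert (Hz : forall z, 2*0 - z = -z) by (intros; lra).
           assert (E: -u = -w).
           { apply Hinj. rewrite !Hz, !Ropp_involutive. auto. }
           lra.
        -- assert (Hz : forall z, 2*0 - z = -z) by (intros; lra). exists v1. split; auto. intros z. rewrite <- Hr. split.
           ++ intros [x Hx]. exists (2*0 - x). rewrite !Hz, Ropp_involutive. auto.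
           ++ intros [x Hx]. exists (2*0 - x). auto.
Qed.
End Main.

Lemma powS_lt u c m : 0 < u < c -> u ^ S m < c ^ S m.
Proof.
  intros H. induction m. { simpl; lra. }
  change (u ^ S (S m)) with (u * u ^ S m). change (c ^ S (S m)) with (c * c ^ S m).
  pose proof (pow_lt u (S m) ltac:(lra)). nra.
Qed.

Lemma pow_le1 v m : 0 <= v <= 1 -> v ^ m <= 1.
Proof. intros H. induction m; simpl; [lra|]. pose proof (pow_le v m ltac:(lra)). nra. Qed.

Section FP.
Variables (n : nat) (a b d C H : R).
Hypothesis hn : (2 <= n)%nat.
Hypothesis hb : b = 1 \/ b = -1.
Hypothesis hd : d = 1 \/ d = -1.

Definition F := fpot n a b d C H.
Definition A0 := a + b*H^2.
Definition B0 := b*H*(2 - INR n).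
Definition c0 := b*(1 - INR n).
Definition F1 v := -2*d*v*(A0 + B0 * / v^n + c0 * (/ v^n)^2).
Definition F2 v := -2*d*(A0 + B0*(1 - INR n) * / v^n + c0*(1 - 2*INR n)*(/ v^n)^2).

Lemma F_der v : 0 < v -> is_derive F v (F1 v).
Proof.
  intros Hv. unfold F, F1, A0, B0, c0, fpot. assert (v^n <> 0) by (apply pow_nonzero; lra). auto_derive; auto.
  destruct n as [|m]; [lia|]. simpl Init.Nat.pred. rewrite S_INR. assert (v^m <> 0) by (apply pow_nonzero; lra).
  change (v ^ S m) with (v * v^m) in *. field. split; lra.
Qed.

Lemma F1_der v : 0 < v -> is_derive F1 v (F2 v).
Proof.
  intros Hv. unfold F1, F2. assert (v^n <> 0) by (apply pow_nonzero; lra). auto_derive; auto.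
  destruct n as [|m]; [lia|]. simpl Init.Nat.pred. rewrite S_INR. assert (v^m <> 0) by (apply pow_nonzero; lra).
  change (v ^ S m) with (v * v^m) in *. field. split; lra.
Qed.

Lemma F2_cont v : 0 < v -> continuity_pt F2 v.
Proof.
  intros Hv. apply continuity_pt_filterlim. apply (ex_derive_continuous F2 v).
  unfold F2. assert (v^n <> 0) by (apply pow_nonzero; lra). auto_derive; auto.
Qed.
End FP.

Section FP2.
Variables (n : nat) (a b d C H : R).
Hypothesis hn : (2 <= n)%nat.
Hypothesis hb : b = 1 \/ b = -1.
Hypothesis hd : d = 1 \/ d = -1.
Let FF := F n a b d C H.
Definition G v := / 2 * Derive FF v.

Lemma G_eq v : 0 < v -> G v = / 2 * F1 n a b d H v.
Proof. intros Hv. unfold G. f_equal. apply is_derive_unique. apply F_der; try lia; lra. Qed.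

Lemma F1_lip al be : 0 < al -> exists K, forall u v, al <= u <= be -> al <= v <= be ->
  Rabs (F1 n a b d H u - F1 n a b d H v) <= K * Rabs (u - v).
Proof.
  intros Hal. destruct (Rle_or_lt al be) as [Hab|Hab].
  2: { exists 0. intros; lra. }
  destruct (continuity_ab_maj (fun v => Rabs (F2 n a b d H v)) al be Hab) as [xM [HM _]].
  { intros c Hc. apply (continuity_pt_comp (F2 n a b d H) Rabs c). apply F2_cont; lra. apply Rcontinuity_abs. }
  exists (Rabs (F2 n a b d H xM)). intros u v Hu Hv.
  assert (key : forall u v, al <= u <= be -> al <= v <= be -> u < v ->
     Rabs (F1 n a b d H u - F1 n a b d H v) <= Rabs (F2 n a b d H xM) * Rabs (u - v)).
  { intros u' v' Hu' Hv' Huv. destruct (mvt (F1 n a b d H) (F2 n a b d H) u' v' Huv) as [c [Hc Heq]].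
    { intros x Hx. apply F1_der; [lia| lra]. }
    rewrite Rabs_minus_sym, Heq, Rabs_mult, (Rabs_minus_sym u').
    apply Rmult_le_compat_r; [apply Rabs_pos|]. apply (HM c). lra. }
  destruct (Rtotal_order u v) as [H1|[H1|H1]].
  - auto.
  - subst. rewrite !Rminus_eq_0, Rabs_R0. rewrite Rmult_0_r. lra.
  - rewrite Rabs_minus_sym, (Rabs_minus_sym u). auto.
Qed.

Lemma G_lip al be : 0 < al -> exists L, forall u v, al <= u <= be -> al <= v <= be ->
  Rabs (G u - G v) <= L * Rabs (u - v).
Proof.
  intros Hal. destruct (F1_lip al be Hal) as [K HK]. exists (/2 * K). intros u v Hu Hv.
  rewrite !G_eq by lra. rewrite <- Rmult_minus_distr_l, Rabs_mult, Rabs_right by lra.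
  rewrite Rmult_assoc. apply Rmult_le_compat_l; [lra|]. auto.
Qed.

Lemma F_cont v : 0 < v -> continuity_pt FF v.
Proof. intros Hv. eapply cont_of_derive. apply F_der; try lia; lra. Qed.

Lemma F_mvt u w : 0 < u < w -> exists c, u < c < w /\ FF w - FF u = 2 * G c * (w - u).
Proof.
  intros Huw. apply (mvt FF (fun c => 2 * G c) u w ltac:(lra)).
  intros x Hx. rewrite G_eq by lra. replace (2 * (/2 * F1 n a b d H x)) with (F1 n a b d H x) by field.
  apply F_der; [lia| lra].
Qed.
End FP2.

Section FP3.
Variables (n : nat) (a b d C H : R).
Hypothesis hn : (2 <= n)%nat.
Hypothesis hb : b = 1 \/ b = -1.
Hypothesis hd : d = 1 \/ d = -1.

Lemma quad3 (A B c w1 w2 w3 : R) : c <> 0 -> A + B*w1 + c*w1^2 = 0 -> A + B*w2 + c*w2^2 = 0 ->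
  A + B*w3 + c*w3^2 = 0 -> w3 < w2 -> w2 < w1 -> False.
Proof.
  intros Hc H1 H2 H3 H32 H21.
  assert (E1 : (w1 - w2) * (B + c*(w1 + w2)) = 0) by nra.
  assert (E2 : (w2 - w3) * (B + c*(w2 + w3)) = 0) by nra.
  apply Rmult_integral in E1. apply Rmult_integral in E2.
  destruct E1 as [E1|E1]; [lra|]. destruct E2 as [E2|E2]; [lra|].
  assert (Hx : c * (w1 - w3) = 0) by lra. apply Rmult_integral in Hx. destruct Hx; [auto| lra].
Qed.

Lemma G_zero_Q v : 0 < v -> G n a b d C H v = 0 ->
  A0 a b H + B0 n b H * (/ v^n) + c0 n b * (/ v^n)^2 = 0.
Proof.
  intros Hv HG. rewrite G_eq in HG by auto. unfold F1 in HG.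
  assert (Hd0 : d <> 0) by lra.
  assert (Hdv : -2 * d * v <> 0) by (apply Rmult_integral_contrapositive; split; lra).
  assert (Hz : -2*d*v*(A0 a b H + B0 n b H * / v ^ n + c0 n b * (/ v ^ n) ^ 2) = 0) by lra.
  apply Rmult_integral in Hz. destruct Hz as [Hz|Hz]; [contradiction| auto].
Qed.

Lemma G_zeros u c w : 0 < u -> u < c -> c < w -> G n a b d C H u = 0 -> G n a b d C H c = 0 ->
  G n a b d C H w = 0 -> False.
Proof.
  intros Hu Huc Hcw Gu Gc Gw.
  apply G_zero_Q in Gu; auto. apply G_zero_Q in Gc; [|lra]. apply G_zero_Q in Gw; [|lra].
  destruct n as [|m] eqn:En; [lia|].
  assert (Hc0 : c0 (S m) b <> 0).
  { unfold c0. rewrite S_INR. pose proof (pos_INR m). apply Rmult_integral_contrapositive. split; [lra|].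
    assert (INR m <> 0). { destruct m; [lia| rewrite S_INR; pose proof (pos_INR m); lra]. } lra. }
  apply (quad3 _ _ _ _ _ _ Hc0 Gu Gc Gw).
  - apply Rinv_lt_contravar. apply Rmult_lt_0_compat; apply pow_lt; lra. apply powS_lt; lra.
  - apply Rinv_lt_contravar. apply Rmult_lt_0_compat; apply pow_lt; lra. apply powS_lt; lra.
Qed.

Lemma F_near0 : exists eps, 0 < eps /\ ((forall v, 0 < v < eps -> F n a b d C H v < 0) \/
   (forall v, 0 < v < eps -> 1 <= F n a b d C H v)).
Proof.
  set (K := Rabs C + Rabs a + 2).
  assert (HK : 2 <= K) by (unfold K; pose proof (Rabs_pos C); pose proof (Rabs_pos a); lra).
  assert (HKH : 0 < K + Rabs H) by (pose proof (Rabs_pos H); lra).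
  set (eps := Rmin 1 (/ (K + Rabs H))).
  assert (He1 : eps <= 1) by apply Rmin_l.
  assert (He2 : eps <= / (K + Rabs H)) by apply Rmin_r.
  assert (He0 : 0 < eps) by (apply Rmin_glb_lt; [lra| apply Rinv_0_lt_compat; lra]).
  assert (key : forall v, 0 < v < eps -> exists z, F n a b d C H v = C - d*a*v^2 - d*b*z^2 /\ K < z /\ v^2 <= 1).
  { intros v [Hv0 Hv]. exists (v*H + v */ v^n). split; [|split].
    - unfold F, fpot. ring.
    - destruct n as [|[|m]] eqn:En; [lia|lia|].
      assert (Hvm : v ^ m <= 1) by (apply pow_le1; lra).
      assert (Hvm0 : 0 < v ^ m) by (apply pow_lt; lra).
      change (v ^ S (S m)) with (v * (v * v^m)).
      assert (v * / (v * (v * v^m)) = / (v * v^m)) by (field; split; lra).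
      rewrite H0.
      assert (/ v <= / (v * v^m)).
      { apply Rinv_le_contravar. apply Rmult_lt_0_compat; lra. nra. }
      assert (K + Rabs H < / v).
      { assert (v * (K + Rabs H) < 1).
        { apply Rlt_le_trans with (eps * (K + Rabs H)). nra.
          apply Rle_trans with (/ (K + Rabs H) * (K + Rabs H)). nra. rewrite Rinv_l; lra. }
        apply (Rmult_lt_reg_l v); [lra|]. rewrite Rinv_r; lra. }
      assert (- (v * H) <= Rabs H).
      { pose proof (Rle_abs (- (v*H))). rewrite Rabs_Ropp, Rabs_mult, Rabs_right in H3 by lra.
        pose proof (Rabs_pos H). nra. }
      lra.
    - nra. }
  exists eps. split; auto.
  destruct hd as [-> | ->]; destruct hb as [-> | ->].
  - left. intros v Hv. destruct (key v Hv) as [z [-> [Hz Hv2]]].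
    pose proof (Rle_abs C). pose proof (Rle_abs a). pose proof (Rle_abs (-a)). rewrite Rabs_Ropp in H2.
    assert (a*v^2 <= Rabs a) by (pose proof (pow2_ge_0 v); nra).
    assert (- (a*v^2) <= Rabs a) by (pose proof (pow2_ge_0 v); nra). unfold K in Hz. nra.
  - right. intros v Hv. destruct (key v Hv) as [z [-> [Hz Hv2]]].
    pose proof (Rle_abs (-C)). rewrite Rabs_Ropp in H0. pose proof (Rle_abs a). pose proof (Rle_abs (-a)). rewrite Rabs_Ropp in H2.
    assert (a*v^2 <= Rabs a) by (pose proof (pow2_ge_0 v); nra).
    assert (- (a*v^2) <= Rabs a) by (pose proof (pow2_ge_0 v); nra). unfold K in Hz. nra.
  - right. intros v Hv. destruct (key v Hv) as [z [-> [Hz Hv2]]].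
    pose proof (Rle_abs (-C)). rewrite Rabs_Ropp in H0. pose proof (Rle_abs a). pose proof (Rle_abs (-a)). rewrite Rabs_Ropp in H2.
    assert (a*v^2 <= Rabs a) by (pose proof (pow2_ge_0 v); nra).
    assert (- (a*v^2) <= Rabs a) by (pose proof (pow2_ge_0 v); nra). unfold K in Hz. nra.
  - left. intros v Hv. destruct (key v Hv) as [z [-> [Hz Hv2]]].
    pose proof (Rle_abs C). pose proof (Rle_abs a). pose proof (Rle_abs (-a)). rewrite Rabs_Ropp in H2.
    assert (a*v^2 <= Rabs a) by (pose proof (pow2_ge_0 v); nra).
    assert (- (a*v^2) <= Rabs a) by (pose proof (pow2_ge_0 v); nra). unfold K in Hz. nra.
Qed.
End FP3.

Theorem mainTheorem8 (n : nat) (a b d C H : R) (g : R -> R)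
  (hn : (2 <= n)%nat)
  (ha : a = -1 \/ a = 0 \/ a = 1)
  (hb : b = 1 \/ b = -1)
  (hd : d = 1 \/ d = -1)
  (hpos : forall x, 0 < g x)
  (hsmooth : smooth g)
  (hnc : exists x y, g x <> g y)
  (hODE1 : forall x, (Derive g x) ^ 2 = fpot n a b d C H (g x))
  (hODE2 : forall x, Derive_n g 2 x = / 2 * Derive (fpot n a b d C H) (g x)) :
  type1 g \/ type2 g \/ type3 g \/ type4 g \/ type5 g.
Proof.
  apply (classify (F n a b d C H) (G n a b d C H)) with (p := Derive g).
  - intros al be Hal. apply G_lip; auto.
  - intros v Hv. apply F_cont; auto.
  - apply F_near0; auto.
  - intros u w Huw. apply F_mvt; auto.
  - intros u c w H1 H2 H3 H4 H5 H6. exact (G_zeros n a b d C H hn hb hd u c w H1 H2 H3 H4 H5 H6).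
  - split; [exact hpos|split].
    + intros x. apply Derive_correct. exact (hsmooth 1%nat x).
    + intros x. unfold G. replace (/ 2 * Derive (F n a b d C H) (g x)) with (Derive_n g 2 x) by (rewrite hODE2; reflexivity).
      apply Derive_correct. exact (hsmooth 2%nat x).
  - exact hODE1.
  - exact hnc.
Qed.
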